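(* Let $k\geq 1$ be an integer. (i) Let $r=2k+1$ and let $1\leq i_1<i_2<\cdots<i_r$ be integers. Then \[ \int_{[0,1]^{i_r}}\frac{dx_1\cdots dx_{i_r}}{1-x_1\cdots x_{i_1}+x_1\cdots x_{i_2}-\cdots+(-1)^r x_1\cdots x_{i_r}} =\zeta^{\star}\big(i_1+1,\{1\}^{i_2-i_1-1},\,i_3-i_2+1,\{1\}^{i_4-i_3-1},\,\ldots,\,i_{2k-1}-i_{2k-2}+1,\{1\}^{i_{2k}-i_{2k-1}-1},\,i_{2k+1}-i_{2k}\big). \] (ii) Let $r=2k$ and let $1\leq i_1<i_2<\cdots<i_r$ be integers. Then \[ \int_{[0,1]^{i_r}}\frac{dx_1\cdots dx_{i_r}}{1-x_1\cdots x_{i_1}+x_1\cdots x_{i_2}-\cdots+(-1)^r x_1\cdots x_{i_r}} =\zeta^{\star}\big(i_1+1,\{1\}^{i_2-i_1-1},\,i_3-i_2+1,\{1\}^{i_4-i_3-1},\,\ldots,\,i_{2k-1}-i_{2k-2}+1,\{1\}^{i_{2k}-i_{2k-1}-1}\big). \] Here the denominator is $1+\sum_{j=1}^{r}(-1)^j\prod_{m=1}^{i_j}x_m$.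
   Context: For integers $k_1\geq 2$ and $k_2,\ldots,k_r\geq 1$, the multiple zeta-star value is $\zeta^{\star}(k_1,\ldots,k_r)=\sum_{n_1\geq n_2\geq\cdots\geq n_r\geq 1}\frac{1}{n_1^{k_1}\cdots n_r^{k_r}}$. The notation $\{1\}^{l}$ denotes $l$ consecutive arguments equal to $1$ (nothing if $l=0$). In the argument lists, the pattern ''$i_{2j-1}-i_{2j-2}+1,\{1\}^{i_{2j}-i_{2j-1}-1}$'' is repeated for $j=2,\ldots,k$ after the initial block $i_1+1,\{1\}^{i_2-i_1-1}$ (so e.g. for $k=1$ in (i) the list is $(i_1+1,\{1\}^{i_2-i_1-1},i_3-i_2)$). *)

(* Defs.v *)
From HB Require Import structures.
From mathcomp Require Import all_boot all_order all_algebra.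
From mathcomp Require Import all_classical all_reals all_analysis.
Set Implicit Arguments. Unset Strict Implicit. Unset Printing Implicit Defensive.
Import Order.TTheory GRing.Theory Num.Theory.
Local Open Scope classical_set_scope.
Local Open Scope ring_scope.

Definition zs_index (r : nat) : set (seq nat) :=
  [set n | size n = r /\ sorted geq n /\ all (fun m => 0 < m)%N n].

Definition zeta_star {R : realType} (ks : seq nat) : \bar R :=
  \esum_(n in zs_index (size ks))
     ((\prod_(j < size ks) ((nth 0%N n j)%:R ^+ (nth 0%N ks j))^-1 : R)%:E).

(* Iterated Lebesgue integral over the unit cube [0,1]^n; the point
   (x_1,...,x_n) is passed to f as the sequence [:: x_1; ...; x_n]
   (x_1 integrated outermost). *)
Fixpoint cube_int {R : realType} (n : nat) (f : seq R -> \bar R) : \bar R :=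
  match n with
  | 0 => f [::]
  | n'.+1 => (\int[@lebesgue_measure R]_(x in `[0%R, 1%R])
                 cube_int n' (fun s => f (x :: s)))%E
  end.

(* Denominator 1 + sum_{j=1}^r (-1)^j x_1 ... x_{i_j}; x_m = nth 0 x (m-1). *)
Definition denom {R : realType} (i : nat -> nat) (r : nat) (x : seq R) : R :=
  1 + \sum_(1 <= j < r.+1) (-1) ^+ j * \prod_(m < i j) nth 0 x m.

(* The blocks  i_{2j-1}-i_{2j-2}+1, {1}^{i_{2j}-i_{2j-1}-1}  for j = 1..k,
   with the convention i_0 = 0 (so the first block is i_1+1, {1}^{i_2-i_1-1}). *)
Definition zblocks (i : nat -> nat) (k : nat) : seq nat :=
  flatten [seq ((i (2 * j - 1) - (if j == 1 then 0 else i (2 * j - 2))).+1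
                 :: nseq (i (2 * j) - i (2 * j - 1) - 1) 1)%N
          | j <- iota 1 k].

(* Main.v *)
Require Import Defs.
From HB Require Import structures.
From mathcomp Require Import all_boot all_order all_algebra.
From mathcomp Require Import all_classical all_reals all_analysis.
From mathcomp Require Import measurable_realfun.
From mathcomp Require Import ring lra zify.
Set Implicit Arguments. Unset Strict Implicit. Unset Printing Implicit Defensive.
Import Order.TTheory GRing.Theory Num.Theory numFieldNormedType.Exports.
Local Open Scope classical_set_scope.
Local Open Scope ring_scope.

Section S.
Variable R : realType.

Definition prim (q : {poly R}) : {poly R} :=
  \poly_(i < (size q).+1) (if i is j.+1 then q`_j / j.+1%:R else 0).

Lemma prim_deriv q : (prim q)^`() = q.
Proof.
apply/polyP => i; rewrite coef_deriv coef_poly.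
case: ltnP => H.
  by rewrite -[X in X = _]mulr_natr mulfVK // pnatr_eq0.
by rewrite mul0rn nth_default.
Qed.

Lemma prim1 q : (prim q).[1] = \sum_(k < size q) q`_k / k.+1%:R.
Proof.
rewrite (@horner_coef_wide _ (size q).+1); last exact: size_poly.
rewrite big_ord_recl /= coef_poly /= mul0r add0r.
apply: eq_bigr => i _; rewrite coef_poly /bump /= ltnS ltn_ord expr1n mulr1 //.
Qed.

Lemma int01_poly (q : {poly R}) :
  (\int[@lebesgue_measure R]_(x in `[0%R, 1%R]) (q.[x])%:E =
   (\sum_(k < size q) q`_k / k.+1%:R)%:E)%E.
Proof.
rewrite (@continuous_FTC2 _ _ (horner (prim q))) //.
- by rewrite horner_coef0 /prim coef_poly /= oppr0 adde0 -/(prim q) prim1.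
- by apply/continuous_subspaceT => x; exact: continuous_horner.
- split.
  + by move=> x _; exact: derivable_horner.
  + by apply: cvg_at_right_filter; exact: continuous_horner.
  + by apply: cvg_at_left_filter; exact: continuous_horner.
- by move=> x _; rewrite -derivE prim_deriv.
Qed.

Lemma int01_poly_wide (q : {poly R}) n : (size q <= n)%N ->
  (\int[@lebesgue_measure R]_(x in `[0%R, 1%R]) (q.[x])%:E =
   (\sum_(k < n) q`_k / k.+1%:R)%:E)%E.
Proof.
move=> Hn; rewrite int01_poly; congr (_%:E).
rewrite (big_ord_widen n (fun k => q`_k / k.+1%:R) Hn) big_mkcond /=.
apply: eq_bigr => i _; case: ifP => // /negbT; rewrite -leqNgt => H.
by rewrite nth_default // mul0r.
Qed.

Definition clamp (x : R) : R := Num.min 1 (Num.max 0 x).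

Lemma clamp_id x : 0 <= x <= 1 -> clamp x = x.
Proof.
by case/andP => h0 h1; rewrite /clamp (max_idPr h0) (min_idPr h1).
Qed.

Lemma clamp_ge0 x : 0 <= clamp x.
Proof. by rewrite /clamp le_min ler01 le_max lexx. Qed.

Lemma clamp_le1 x : clamp x <= 1.
Proof. by rewrite /clamp ge_min lexx. Qed.

Definition gb (b : bool) : {poly R} := if b then 1 - 'X else 'X.

Fixpoint Ef (bs : seq bool) (s : seq R) : R :=
  match bs with
  | [::] => 0
  | b :: bs' => clamp (head 0 s) * (gb b).[Ef bs' (behead s)]
  end.

Definition Lam (m : nat -> R) (p : {poly R}) : R :=
  \sum_(j < size p) p`_j * m j.

Fixpoint mom (bs : seq bool) : nat -> R :=
  match bs with
  | [::] => fun k => (k == 0)%:R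
  | b :: bs' => fun k => Lam (mom bs') (gb b ^+ k) / k.+1%:R
  end.

Lemma Lam_wide m (p : {poly R}) n : (size p <= n)%N -> Lam m p = \sum_(j < n) p`_j * m j.
Proof.
move=> Hn; rewrite /Lam (big_ord_widen n (fun j => p`_j * m j) Hn) big_mkcond /=.
apply: eq_bigr => i _; case: ifP => // /negbT; rewrite -leqNgt => H.
by rewrite nth_default // mul0r.
Qed.

Lemma LamD m p q : Lam m (p + q) = Lam m p + Lam m q.
Proof.
set n := maxn (size p) (size q).
rewrite (@Lam_wide _ _ n) ?(leq_trans (size_polyD _ _)) //.
rewrite (@Lam_wide _ p n) ?leq_maxl // (@Lam_wide _ q n) ?leq_maxr //.
by rewrite -big_split /=; apply: eq_bigr => i _; rewrite coefD mulrDl.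
Qed.

Lemma LamZ m c p : Lam m (c *: p) = c * Lam m p.
Proof.
rewrite (@Lam_wide _ _ (size p)) ?size_scale_leq // /Lam mulr_sumr.
by apply: eq_bigr => i _; rewrite coefZ mulrA.
Qed.

Lemma Lam0 m : Lam m 0 = 0.
Proof. by rewrite /Lam size_poly0 big_ord0. Qed.

Lemma Lam_sum m n (F : 'I_n -> {poly R}) :
  Lam m (\sum_(i < n) F i) = \sum_(i < n) Lam m (F i).
Proof.
exact: (big_morph _ (LamD m) (Lam0 m)).
Qed.

Lemma LamXn m k : Lam m ('X^k) = m k.
Proof.
rewrite (@Lam_wide _ _ k.+1) ?size_polyXn // big_ord_recr /= big1 ?add0r.
  by rewrite coefXn eqxx mul1r.
by move=> i _; rewrite coefXn; case: eqP => [h|]; [move: (ltn_ord i); rewrite h ltnn | rewrite mul0r].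
Qed.

Lemma comp_scale_step m (p g : {poly R}) x :
  Lam m (p \Po (x *: g)) =
  (\poly_(k < size p) (p`_k * Lam m (g ^+ k))).[x].
Proof.
rewrite comp_polyE Lam_sum (horner_coef_wide _ (size_poly _ _)).
apply: eq_bigr => i _; rewrite coef_poly ltn_ord exprZn scalerA LamZ.
by rewrite mulrAC.
Qed.

Lemma PL_step b bs (p : {poly R}) :
  (\int[@lebesgue_measure R]_(x in `[0%R, 1%R])
     (Lam (mom bs) (p \Po (clamp x *: gb b)))%:E)%E = (Lam (mom (b :: bs)) p)%:E.
Proof.
transitivity (\int[@lebesgue_measure R]_(x in `[0%R, 1%R])
   ((\poly_(k < size p) (p`_k * Lam (mom bs) (gb b ^+ k))).[x])%:E)%E.
  by apply: eq_integral => x /[!inE] x01; rewrite comp_scale_step clamp_id.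
rewrite (@int01_poly_wide _ (size p)) ?size_poly //.
rewrite (@Lam_wide _ _ (size p)) //; congr (_%:E); apply: eq_bigr => i _.
by rewrite coef_poly ltn_ord mulrA.
Qed.

Lemma Lam_nil q : Lam (mom [::]) q = q.[0].
Proof.
rewrite (@Lam_wide _ _ (size q).+1) // big_ord_recl big1 ?addr0.
  by rewrite mulr1 horner_coef0.
by move=> i _; rewrite mulr0.
Qed.

Lemma PL bs (p : {poly R}) :
  cube_int (size bs) (fun s => (p.[Ef bs s])%:E) = (Lam (mom bs) p)%:E.
Proof.
elim: bs p => [|b bs IH] p /=; first by rewrite Lam_nil.
rewrite -PL_step; apply: eq_integral => x _.
under eq_fun do rewrite -hornerZ -horner_comp.
by rewrite IH.
Qed.

Lemma measurable_clamp : measurable_fun setT clamp.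
Proof.
apply: measurable_minr; first exact: measurable_cst.
apply: measurable_maxr; [exact: measurable_cst | exact: measurable_id].
Qed.

Lemma meas_poly_clamp (q : {poly R}) (D : set R) :
  measurable_fun D (fun x => (q.[clamp x])%:E).
Proof.
apply: measurable_funTS; apply/measurable_EFinP.
apply: (measurableT_comp (f := horner q)); last exact: measurable_clamp.
apply: continuous_measurable_fun; exact: continuous_horner.
Qed.

Lemma gb_01 b y : 0 <= y <= 1 -> 0 <= (gb b).[y] <= 1.
Proof.
case/andP => h0 h1; case: b; rewrite /gb !hornerE.
  by rewrite subr_ge0 h1 lerBlDr lerDl h0.
by rewrite h0 h1.
Qed.

Lemma Ef_01 bs s : 0 <= Ef bs s <= 1.
Proof.
elim: bs s => [|b bs IH] s /=; first by rewrite lexx ler01.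
have /andP[h0 h1] := gb_01 b (IH (behead s)).
by rewrite mulr_ge0 ?clamp_ge0 // mulr_ile1 ?clamp_ge0 ?clamp_le1.
Qed.

Lemma cube_int_ge0 n (f : seq R -> \bar R) : (forall s, (0 <= f s)%E) ->
  (0 <= cube_int n f)%E.
Proof.
elim: n f => [|n IH] f f0 /=; first exact: f0.
by apply: integral_ge0 => x _; apply: IH => s.
Qed.

Lemma IL bs (p : nat -> {poly R}) :
  (forall n y, 0 <= y <= 1 -> 0 <= (p n).[y]) ->
  cube_int (size bs) (fun s => (\sum_(n <oo) ((p n).[Ef bs s])%:E)%E) =
  (\sum_(n <oo) (Lam (mom bs) (p n))%:E)%E.
Proof.
elim: bs p => [|b bs IH] p p0 /=.
  by apply: eq_eseriesr => n _; rewrite Lam_nil.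
transitivity (\int[@lebesgue_measure R]_(x in `[0%R, 1%R])
   (\sum_(n <oo) (Lam (mom bs) (p n \Po (clamp x *: gb b)))%:E))%E.
  apply: eq_integral => x _.
  under eq_fun do under eq_eseriesr do rewrite -hornerZ -horner_comp.
  rewrite IH // => n y y01; rewrite horner_comp hornerZ; apply: p0.
  have /andP[h0 h1] := gb_01 b y01.
  by rewrite mulr_ge0 ?clamp_ge0 // mulr_ile1 ?clamp_ge0 ?clamp_le1.
rewrite integral_nneseries //.
- by apply: eq_eseriesr => n _; rewrite PL_step.
- move=> n.
  have -> : (fun x : R => (Lam (mom bs) (p n \Po (clamp x *: gb b)))%:E) =
    (fun x => ((\poly_(k < size (p n)) ((p n)`_k * Lam (mom bs) (gb b ^+ k))).[clamp x])%:E).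
    by apply/funext => x; rewrite comp_scale_step.
  exact: meas_poly_clamp.
- move=> n x _; rewrite -PL; apply: cube_int_ge0 => s.
  rewrite lee_fin horner_comp hornerZ; apply: p0.
  have /andP[h0 h1] := gb_01 b (Ef_01 bs s).
  by rewrite mulr_ge0 ?clamp_ge0 // mulr_ile1 ?clamp_ge0 ?clamp_le1.
Qed.

Lemma geo_eseries (y : R) : 0 <= y < 1 ->
  (\sum_(n <oo) (y ^+ n)%:E)%E = ((1 - y)^-1)%:E.
Proof.
move=> /andP[y0 y1].
have h : series (geometric 1 y) @ \oo --> (1 * (1 - y)^-1).
  by apply: cvg_geometric_series; rewrite ger0_norm.
rewrite mul1r in h.
apply: cvg_lim => //; apply: cvg_EFin.
  by apply: nearW => n /=; rewrite sumEFin.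
rewrite (_ : fine \o _ = series (geometric 1 y)) //.
apply/funext => n /=; rewrite sumEFin /= /series /=.
by apply: eq_bigr => i _; rewrite /geometric /= mul1r.
Qed.

Lemma top b bs :
  cube_int (size bs).+1 (fun s => ((1 - Ef (b :: bs) s)^-1)%:E) =
  (\sum_(n <oo) (mom (b :: bs) n)%:E)%E.
Proof.
have IL' := @IL (b :: bs) (fun n => 'X^n).
rewrite /= in IL'.
under [RHS]eq_eseriesr do rewrite -LamXn.
rewrite -IL'; last by move=> n y /andP[y0 _]; rewrite hornerXn exprn_ge0.
set F := fun x => cube_int (size bs)
   (fun s => ((1 - clamp x * (gb b).[Ef bs s])^-1)%:E).
set H := fun x => cube_int (size bs)
   (fun s => (\sum_(n <oo) (('X^n).[clamp x * (gb b).[Ef bs s]])%:E)%E).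
have FH : {in `[0%R, 1%R[, F =1 H}.
  move=> x; rewrite in_itv /= => /andP[x0 x1].
  rewrite /F /H; congr cube_int; apply/funext => s.
  under eq_eseriesr do rewrite hornerXn.
  rewrite geo_eseries //.
  have /andP[h0 h1] := gb_01 b (Ef_01 bs s).
  rewrite mulr_ge0 ?clamp_ge0 //= clamp_id ?x0 ?ltW //; nra.
have mH : measurable_fun (`[0%R, 1%R[ : set R) H.
  have mG : measurable_fun (`[0%R, 1%R[ : set R) (fun x =>
     (\sum_(n <oo) (Lam (mom bs) ('X^n \Po (clamp x *: gb b)))%:E)%E).
    have := @ge0_emeasurable_sum _ R R (`[0%R, 1%R[ : set R)
      (fun n x => (Lam (mom bs) ('X^n \Po (clamp x *: gb b)))%:E) xpredT.
    apply.
      move=> n x _ _; rewrite -PL; apply: cube_int_ge0 => s.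
      rewrite lee_fin horner_comp hornerZ hornerXn exprn_ge0 //.
      have /andP[h0 h1] := gb_01 b (Ef_01 bs s).
      by rewrite mulr_ge0 ?clamp_ge0.
    move=> n _.
    have -> : (fun x : R => (Lam (mom bs) ('X^n \Po (clamp x *: gb b)))%:E) =
      (fun x => ((\poly_(k < size ('X^n : {poly R})) (('X^n : {poly R})`_k * Lam (mom bs) (gb b ^+ k))).[clamp x])%:E).
      by apply/funext => x; rewrite comp_scale_step.
    exact: meas_poly_clamp.
  apply: (eq_measurable_fun _ _ mG) => x _.
  rewrite /H -IL.
    by congr cube_int; apply/funext => s; apply: eq_eseriesr => n _;
       rewrite horner_comp hornerZ.
  move=> n y y01; rewrite horner_comp hornerZ hornerXn exprn_ge0 //.
  have /andP[h0 h1] := gb_01 b y01.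
  by rewrite mulr_ge0 ?clamp_ge0.
have mF : measurable_fun (`[0%R, 1%R[ : set R) F.
  by apply: (eq_measurable_fun _ _ mH) => x; rewrite inE => xin; rewrite FH.
rewrite /= -/F -/H -(integral_itv_bndo_bndc mF) -(integral_itv_bndo_bndc mH).
by apply: eq_integral => x; rewrite inE => xin; rewrite FH.
Qed.
End S.
Section Z.
Variable R : realType.

Definition wt (ks : seq nat) (n : seq nat) : R :=
  \prod_(j < size ks) ((nth 0%N n j)%:R ^+ (nth 0%N ks j))^-1.

Fixpoint Zt (ks : seq nat) (N : nat) : R :=
  if ks is k :: ks' then \sum_(M < N) ((M.+1%:R ^+ k)^-1 * Zt ks' M.+1) else 1.

Definition Sb (ks : seq nat) (M : nat) : set (seq nat) :=
  [set n | zs_index (size ks) n /\ (nth 0%N n 0 <= M)%N].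

Lemma wt_cons k ks m n : wt (k :: ks) (m :: n) = (m%:R ^+ k)^-1 * wt ks n.
Proof. by rewrite /wt big_ord_recl. Qed.

Lemma wt_ge0 ks n : 0 <= wt ks n.
Proof. by apply: prodr_ge0 => j _; rewrite invr_ge0 exprn_ge0. Qed.

Lemma Zt_ge0 ks N : 0 <= Zt ks N.
Proof.
elim: ks N => [|k ks IH] N /=; first exact: ler01.
by apply: sumr_ge0 => j _; rewrite mulr_ge0 ?invr_ge0 ?exprn_ge0.
Qed.

Lemma zs_consP k ks n :
  zs_index (size (k :: ks)) n <->
  exists M, exists n', n = M.+1 :: n' /\ Sb ks M.+1 n'.
Proof.
split.
  case: n => [|m n'] [] //= [sz] [srt] /andP[m0 aln].
  exists m.-1, n'; rewrite prednK //; split => //; split.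
    split => //; split => //; case: n' srt {aln sz} => //= y p /andP[_ ->] //.
  by case: n' srt {aln sz} => //= y p /andP[].
case=> M [n' [-> [[sz [srt aln]] hd]]]; split; first by rewrite /= sz.
split => //=; case: n' srt hd {aln sz} => //= y p -> -> //.
Qed.

Lemma Sb_consP k ks M n :
  Sb (k :: ks) M n <->
  exists2 M', (M' < M)%N & exists n', n = M'.+1 :: n' /\ Sb ks M'.+1 n'.
Proof.
split.
  case=> /zs_consP [M' [n' [-> H]]] /= hM; exists M' => //; by exists n'.
case=> M' hM [n' [-> H]]; split; last by [].
by apply/zs_consP; exists M', n'.
Qed.

Lemma Zesum ks M (c : R) : 0 <= c ->
  \esum_(n in Sb ks M) ((c * wt ks n)%:E) = (c * Zt ks M)%:E.
Proof.
elim: ks M c => [|k ks IH] M c c0.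
  rewrite (_ : Sb [::] M = [set [::]]).
    by rewrite esum_set1 /wt ?big_ord0 //= lee_fin mulr1.
  apply/seteqP; split => n /=.
    by case=> [[]]; case: n.
  by move=> ->; split => //; split.
have -> : Sb (k :: ks) M =
    \bigcup_(M' in [set j | (j < M)%N]) ((cons M'.+1) @` Sb ks M'.+1).
  apply/seteqP; split => n.
    by case/Sb_consP => M' hM [n' [-> H]]; exists M' => //; exists n'.
  case=> M' hM [n' H <-]; apply/Sb_consP; exists M' => //; by exists n'.
rewrite esum_bigcupT; first last.
- by move=> n; rewrite lee_fin mulr_ge0 ?wt_ge0.
- move=> i j _ _ [n /= [[n1 _ <-] [n2 _ h]]].
  by case: h => ->.
transitivity (\esum_(M' in [set j | (j < M)%N])
   ((c * ((M'.+1%:R ^+ k)^-1 * Zt ks M'.+1))%:E)).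
  apply: eq_esum => M' _; rewrite esum_image; last first.
    by move=> x y _ _ [].
  under eq_esum do rewrite wt_cons mulrA.
  by rewrite IH ?mulrA // mulr_ge0 // invr_ge0 exprn_ge0.
rewrite esum_fset; first last.
- by move=> i _; rewrite lee_fin !mulr_ge0 ?invr_ge0 ?exprn_ge0 ?Zt_ge0.
- exact: finite_II.
by rewrite -fsbig_ord sumEFin /= mulr_sumr.
Qed.

Lemma Zfull k ks :
  zeta_star (R := R) (k :: ks) =
  (\sum_(M <oo) (((M.+1%:R ^+ k)^-1 * Zt ks M.+1))%:E)%E.
Proof.
rewrite /zeta_star -/(wt (k :: ks) _).
have -> : zs_index (size (k :: ks)) =
    \bigcup_(M in setT) ((cons M.+1) @` Sb ks M.+1).
  apply/seteqP; split => n.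
    by case/zs_consP => M [n' [-> H]]; exists M => //; exists n'.
  by case=> M _ [n' H <-]; apply/zs_consP; exists M, n'.
rewrite esum_bigcupT; first last.
- by move=> n; rewrite lee_fin wt_ge0.
- move=> i j _ _ [n /= [[n1 _ <-] [n2 _ h]]].
  by case: h => ->.
rewrite nneseries_esumT; last first.
  by move=> n; rewrite lee_fin mulr_ge0 ?invr_ge0 ?exprn_ge0 ?Zt_ge0.
apply: eq_esum => M _; rewrite esum_image; last by move=> x y _ _ [].
under eq_esum do rewrite -/(wt (k :: ks) _) wt_cons.
by rewrite Zesum // invr_ge0 exprn_ge0.
Qed.
End Z.

Section S3.
Variable R : realType.
Local Notation mom := (mom R).
Local Notation gb := (gb R).
Local Notation prim := (@prim R).

Lemma prim_uniq (F q : {poly R}) : F^`() = q -> F`_0 = 0 -> F = prim q.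
Proof.
move=> dF F0; apply/polyP => i; rewrite coef_poly.
case: i => [|j]; first by rewrite F0 /=.
have Hq : q`_j = F`_j.+1 *+ j.+1 by rewrite -dF coef_deriv.
have -> : F`_j.+1 = q`_j / j.+1%:R.
  by rewrite Hq -[X in X / _]mulr_natr mulfK // pnatr_eq0.
case: ltnP => // H; rewrite nth_default ?mul0r //.
Qed.

Lemma XI (q : {poly R}) :
  'X * \poly_(j < size q) (q`_j / j.+1%:R) = prim q.
Proof.
apply/polyP => i; rewrite coefXM /prim !coef_poly.
case: i => [|j] //=; rewrite ltnS.
Qed.

Lemma geomX (g : {poly R}) n :
  (1 - g) * \sum_(m < n) g ^+ m = 1 - g ^+ n.
Proof.
elim: n => [|n IH]; first by rewrite big_ord0 mulr0 expr0 subrr.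
by rewrite big_ord_recr /= mulrDr IH exprS; ring.
Qed.

Lemma Ikey n :
  \poly_(j < size ((1 - 'X)^+n : {poly R})) (((1 - 'X)^+n)`_j / j.+1%:R) =
  (n.+1%:R : R)^-1 *: \sum_(m < n.+1) (1 - 'X : {poly R})^+m.
Proof.
apply: (@mulfI _ 'X); first by rewrite polyX_eq0.
rewrite XI -scalerAr.
have G := geomX (1 - 'X) n.+1.
have e : 1 - (1 - 'X) = 'X :> {poly R} by rewrite opprB addrC subrK.
rewrite e in G; rewrite G; symmetry; apply: prim_uniq.
  have d1 : (1 : {poly R})^`() = 0 by rewrite -polyC1 derivC.
  rewrite derivZ derivB d1 sub0r deriv_exp derivB d1 derivX sub0r /=.
  rewrite mulN1r mulNrn opprK -scalerMnr scalerMnl -mulr_natr mulVf ?pnatr_eq0 //.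
  by rewrite scale1r.
rewrite coefZ coefB coef1 /= -horner_coef0 hornerE !hornerE subr0 expr1n.
by rewrite subrr mulr0.
Qed.


Lemma Lam_comp m (P g : {poly R}) : Lam m (P \Po g) = Lam (fun k => Lam m (g ^+ k)) P.
Proof.
have := comp_scale_step m P g 1; rewrite scale1r => ->.
rewrite (horner_coef_wide _ (size_poly _ _)) /Lam; apply: eq_bigr => i _.
by rewrite coef_poly ltn_ord expr1n mulr1.
Qed.

Lemma Lam_cons b bs p :
  Lam (mom (b :: bs)) p =
  Lam (mom bs) (\poly_(j < size p) (p`_j / j.+1%:R) \Po gb b).
Proof.
rewrite Lam_comp (Lam_wide _ (size_poly _ _)) /Lam /=; apply: eq_bigr => i _.
by rewrite coef_poly ltn_ord mulrA mulrAC.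
Qed.

Lemma comp_1mX m (g : {poly R}) : (1 - 'X)^+m \Po g = (1 - g)^+m.
Proof.
elim: m => [|m IH]; first by rewrite !expr0 -polyC1 comp_polyC.
by rewrite !exprS comp_polyM IH comp_polyB comp_polyX -polyC1 comp_polyC.
Qed.

Lemma comp_sum n (F : 'I_n -> {poly R}) (g : {poly R}) :
  (\sum_(i < n) F i) \Po g = \sum_(i < n) (F i \Po g).
Proof.
elim/big_rec2: _ => [|i y1 y2 _ <-]; first exact: comp_poly0.
by rewrite comp_polyD.
Qed.

Lemma Gstep b bs n :
  Lam (mom (b :: bs)) ((1 - 'X)^+n) =
  (n.+1%:R)^-1 * \sum_(m < n.+1) Lam (mom bs) ((1 - gb b)^+m).
Proof.
rewrite Lam_cons Ikey comp_polyZ LamZ; congr (_ * _).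
rewrite comp_sum Lam_sum.
by apply: eq_bigr => m _; rewrite comp_1mX.
Qed.

Lemma mom_false bs n : mom (false :: bs) n = mom bs n / n.+1%:R.
Proof. by rewrite /= LamXn. Qed.

Lemma mom_true bs n : mom (true :: bs) n = Lam (mom bs) ((1 - 'X)^+n) / n.+1%:R.
Proof. by []. Qed.

Lemma Gstep_false bs n :
  Lam (mom (false :: bs)) ((1 - 'X)^+n) =
  (n.+1%:R)^-1 * \sum_(m < n.+1) Lam (mom bs) ((1 - 'X)^+m).
Proof. by rewrite Gstep. Qed.

Lemma Gstep_true bs n :
  Lam (mom (true :: bs)) ((1 - 'X)^+n) =
  (n.+1%:R)^-1 * \sum_(m < n.+1) mom bs m.
Proof.
rewrite Gstep; congr (_ * _); apply: eq_bigr => m _.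
by rewrite /gb opprB addrC subrK LamXn.
Qed.
End S3.

Section S4.
Variable R : realType.
Local Notation mom := (mom R).
Local Notation gb := (gb R).
Local Notation Zt := (Zt R).

Definition blk (l : nat) : seq bool := nseq l.-1 false ++ [:: true].
Definition bsof (ls : seq nat) : seq bool := flatten (map blk ls).
Fixpoint kso (ls : seq nat) : seq nat :=
  match ls with
  | [::] => [::]
  | [:: l] => [:: l]
  | l :: (l' :: rest) as t => l.+1 :: (nseq l'.-1 1%N ++ kso rest)
  end.

Lemma bsof_cons l ls : bsof (l :: ls) = nseq l.-1 false ++ true :: bsof ls.
Proof. by rewrite /bsof /= /blk -catA. Qed.

Lemma momF j B n :
  mom (nseq j false ++ true :: B) n = Lam (mom B) ((1 - 'X)^+n) / (n.+1%:R)^+j.+1.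
Proof.
elim: j n => [|j IH] n /=; first by rewrite expr1.
by rewrite LamXn IH [in RHS]exprSr invfM mulrA.
Qed.

Lemma momG j B K n :
  (forall N, \sum_(m < N.+1) mom B m = Zt K N.+1) ->
  Lam (mom (nseq j false ++ true :: B)) ((1 - 'X)^+n) =
  (n.+1%:R)^-1 * Zt (nseq j 1%N ++ K) n.+1.
Proof.
move=> HB; elim: j n => [|j IH] n /=; first by rewrite Gstep_true HB.
rewrite Gstep_false; congr (_ * _); apply: eq_bigr => m _.
by rewrite IH expr1.
Qed.

Lemma Lam_nil_1mX n : Lam (mom [::]) ((1 - 'X)^+n) = 1.
Proof. by rewrite Lam_nil !hornerE subr0 expr1n. Qed.

Lemma Hsum ls : all (fun l => 0 < l)%N ls ->
  forall N, \sum_(m < N.+1) mom (bsof ls) m = Zt (kso ls) N.+1.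
Proof.
move: {2}(size ls) (leqnn (size ls)) => sz.
elim: sz ls => [|sz IH] ls.
  case: ls => // _ _ N.
  rewrite big_ord_recl /= big1 ?addr0 // => i _.
case: ls => [|l [|l' U]] hs hpos N.
- rewrite big_ord_recl /= big1 ?addr0 // => i _.
- rewrite /= in hpos; move: hpos => /andP[l0 _].
  rewrite bsof_cons /=; apply: eq_bigr => m _.
  rewrite (momF l.-1 (bsof [::])) [bsof [::]]/= Lam_nil_1mX prednK // mulr1 div1r //.
- move: hpos => /= /andP[l0 /andP[l'0 hU]].
  rewrite bsof_cons /=; apply: eq_bigr => m _.
  rewrite momF bsof_cons (momG _ _ (IH U _ hU)); last first.
    by rewrite /= ltnS in hs; apply: ltnW.
  rewrite prednK // exprS invfM; ring.
Qed.

Lemma series_zeta l l' U : all (fun l => 0 < l)%N [:: l, l' & U] ->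
  (\sum_(n <oo) (mom (bsof [:: l, l' & U]) n)%:E)%E =
  zeta_star (R := R) (kso [:: l, l' & U]).
Proof.
move=> /= /andP[l0 /andP[l'0 hU]].
rewrite Zfull; apply: eq_eseriesr => n _; congr (_%:E).
rewrite bsof_cons momF bsof_cons (momG _ _ (Hsum hU)).
rewrite prednK // exprS invfM; ring.
Qed.
End S4.

Section S5.
Variable R : realType.
Local Notation mom := (mom R).
Local Notation gb := (gb R).
Local Notation Zt := (Zt R).
Local Notation clamp := (@clamp R).

Lemma Ef_blk j B (s : seq R) :
  Ef (nseq j false ++ true :: B) s =
  (\prod_(m < j.+1) clamp (nth 0 s m)) * (1 - Ef B (drop j.+1 s)).
Proof.
elim: j s => [|j IH] s /=.
  by rewrite big_ord1 /gb !hornerE drop1 nth0.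
rewrite /gb hornerX IH [in RHS]big_ord_recl /= mulrA -drop1 drop_drop addn1 nth0.
congr (_ * _ * _); apply: eq_bigr => m _.
by rewrite nth_drop /bump /= add1n.
Qed.

Lemma Ef_formula ls (s : seq R) : all (fun l => 0 < l)%N ls ->
  Ef (bsof ls) s =
  \sum_(j < size ls) (-1) ^+ j * \prod_(m < sumn (take j.+1 ls)) clamp (nth 0 s m).
Proof.
elim: ls s => [|l ls IH] s /=; first by rewrite big_ord0.
move=> /andP[l0 hls]; rewrite bsof_cons Ef_blk prednK // IH //.
rewrite big_ord_recl /= expr0 mul1r take0 addn0 mulrBr mulr1; congr (_ + _).
rewrite mulr_sumr -sumrN; apply: eq_bigr => j _.
rewrite /bump /= exprS mulN1r mulNr; congr (- _).
rewrite mulrCA; congr (_ * _).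
rewrite big_split_ord /= add1n; congr (_ * _).
by apply: eq_bigr => m _; rewrite nth_drop.
Qed.

Lemma size_bsof ls : all (fun l => 0 < l)%N ls -> size (bsof ls) = sumn ls.
Proof.
elim: ls => [|l ls IH] //= /andP[l0 hls].
by rewrite bsof_cons size_cat size_nseq /= IH // -addSnnS prednK.
Qed.

Lemma cube_int_eq_in n (f g : seq R -> \bar R) :
  (forall s, size s = n -> all (fun x => 0 <= x <= 1) s -> f s = g s) ->
  cube_int n f = cube_int n g.
Proof.
elim: n f g => [|n IH] f g H /=; first exact: H.
apply: eq_integral => x; rewrite inE /= in_itv /= => x01.
apply: IH => s sz hs; apply: H => /=; first by rewrite sz.
by rewrite x01 hs.
Qed.

Definition ip (i : nat -> nat) (j : nat) : nat := if j == 0%N then 0%N else i j.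
Definition lens (i : nat -> nat) (r : nat) : seq nat :=
  [seq (i j.+1 - ip i j)%N | j <- iota 0 r].

Section Hyp.
Variables (i : nat -> nat) (r : nat).
Hypothesis i1 : (1 <= i 1)%N.
Hypothesis iinc : forall j, (1 <= j < r)%N -> (i j < i j.+1)%N.

Lemma ip_le j : (j < r)%N -> (ip i j < i j.+1)%N.
Proof.
rewrite /ip; case: j => [|j] hj //=.
by apply: iinc; rewrite hj.
Qed.

Lemma lens_pos : all (fun l => 0 < l)%N (lens i r).
Proof.
apply/allP => l /mapP [j]; rewrite mem_iota add0n => /andP[_ hj] ->.
by rewrite subn_gt0 ip_le.
Qed.

Lemma sumn_lens t : (t <= r)%N -> sumn (take t (lens i r)) = ip i t.
Proof.
rewrite /lens -map_take take_iota.
elim: t => [|t IH] ht; first by rewrite min0n /= /ip.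
rewrite (minn_idPl ht) -addn1 iotaD map_cat sumn_cat /= add0n addn0.
have ht' := ltnW ht.
rewrite (minn_idPl ht') in IH; rewrite IH //.
have := ip_le ht; rewrite addn1 /ip /=; lia.
Qed.

Lemma size_bsof_lens : (1 <= r)%N -> size (bsof (lens i r)) = i r.
Proof.
move=> r1; rewrite size_bsof ?lens_pos //.
rewrite -(@take_oversize _ r (lens i r)) ?size_map ?size_iota //.
by rewrite sumn_lens // /ip; case: r r1.
Qed.

Lemma nth01 (s : seq R) m : all (fun x => 0 <= x <= 1) s -> 0 <= nth 0 s m <= 1.
Proof.
move=> /allP hs; case: (ltnP m (size s)) => hm.
  by apply: hs; rewrite mem_nth.
by rewrite nth_default // lexx ler01.
Qed.

Lemma denom_Ef (s : seq R) : all (fun x => 0 <= x <= 1) s ->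
  denom i r s = 1 - Ef (bsof (lens i r)) s.
Proof.
move=> hs; rewrite Ef_formula ?lens_pos // size_map size_iota /denom big_add1 /=.
rewrite big_mkord -sumrN; congr (1 + _); apply: eq_bigr => j _.
rewrite sumn_lens // /ip /= exprS mulN1r mulNr; congr (- (_ * _)).
by apply: eq_bigr => m _; rewrite clamp_id // nth01.
Qed.
End Hyp.

Definition zg (i : nat -> nat) (j : nat) : seq nat :=
  ((i (2 * j - 1) - (if j == 1 then 0 else i (2 * j - 2))).+1
     :: nseq (i (2 * j) - i (2 * j - 1) - 1) 1)%N.

Lemma zg_eq (i : nat -> nat) a :
  zg i a.+1 = ((i (2 * a).+1 - ip i (2 * a)).+1
                :: nseq (i (2 * a).+2 - ip i (2 * a).+1).-1 1)%N.
Proof.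
rewrite /zg /ip.
have -> : (2 * a.+1 - 1 = (2 * a).+1)%N by lia.
have -> : (2 * a.+1 - 2 = 2 * a)%N by lia.
have -> : (2 * a.+1 = (2 * a).+2)%N by lia.
by case: a => [|a] //=; rewrite subn1.
Qed.

Lemma kso_cons2 l l' rest : kso [:: l, l' & rest] = (l.+1 :: (nseq l'.-1 1 ++ kso rest))%N.
Proof. by []. Qed.

Lemma flatten_cons' (T : Type) (x : seq T) s : flatten (x :: s) = x ++ flatten s.
Proof. by []. Qed.

Lemma kso_even (i : nat -> nat) a k :
  kso [seq (i j.+1 - ip i j)%N | j <- iota (2 * a)%N (2 * k)%N] =
  flatten [seq zg i j | j <- iota a.+1 k].
Proof.
elim: k a => [|k IH] a; first by rewrite muln0.
have -> : iota (2 * a) (2 * k.+1) = [:: 2 * a, (2 * a).+1 & iota (2 * a.+1) (2 * k)]%N.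
  have -> : (2 * k.+1 = (2 * k).+2)%N by lia.
  by rewrite /= (_ : (2 * a).+2 = 2 * a.+1)%N //; lia.
by rewrite !map_cons kso_cons2 IH flatten_cons' zg_eq.
Qed.

Lemma kso_odd (i : nat -> nat) a k :
  kso [seq (i j.+1 - ip i j)%N | j <- iota (2 * a)%N (2 * k).+1%N] =
  flatten [seq zg i j | j <- iota a.+1 k] ++ [:: (i (2 * a + 2 * k).+1 - ip i (2 * a + 2 * k))%N].
Proof.
elim: k a => [|k IH] a; first by rewrite muln0 addn0.
have -> : iota (2 * a) (2 * k.+1).+1 = [:: 2 * a, (2 * a).+1 & iota (2 * a.+1) (2 * k).+1]%N.
  have -> : ((2 * k.+1).+1 = (2 * k).+3)%N by lia.
  by rewrite /= (_ : (2 * a).+2 = 2 * a.+1)%N //; lia.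
rewrite !map_cons kso_cons2 IH flatten_cons' zg_eq /= -catA.
have -> : (2 * a.+1 + 2 * k = 2 * a + 2 * k.+1)%N by lia.
by [].
Qed.

Lemma zblocks_even (i : nat -> nat) k : kso (lens i (2 * k)%N) = zblocks i k.
Proof. by rewrite /lens -(muln0 2) kso_even. Qed.

Lemma zblocks_odd (i : nat -> nat) k : (1 <= k)%N ->
  kso (lens i (2 * k + 1)%N) = zblocks i k ++ [:: (i (2 * k + 1) - i (2 * k))%N].
Proof.
move=> k1; rewrite /lens addn1 -{1}(muln0 2) kso_odd muln0 add0n /ip.
by have -> : (2 * k == 0)%N = false by lia.
Qed.
End S5.

Lemma main_r (R : realType) (i : nat -> nat) r : (2 <= r)%N -> (1 <= i 1)%N ->
  (forall j, (1 <= j < r)%N -> (i j < i j.+1)%N) ->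
  cube_int (i r) (fun x => ((denom i r x)^-1)%:E) = zeta_star (R := R) (kso (lens i r)).
Proof.
move=> r2 i1 iinc.
have sz := size_bsof_lens i1 iinc (ltnW r2).
rewrite -sz.
rewrite (@cube_int_eq_in _ _ _ (fun s => ((1 - Ef (bsof (lens i r)) s)^-1)%:E)); last first.
  by move=> s _ hs; rewrite (denom_Ef i1 iinc).
have hpos := lens_pos i1 iinc.
case: r r2 iinc sz hpos => [|[|r']] // _ iinc sz hpos.
have [l [l' [U E]]] : exists l l' U, lens i r'.+2 = [:: l, l' & U].
  by rewrite /lens /=; do 3 eexists.
rewrite E in hpos *.
case Eb: (bsof [:: l, l' & U]) => [|b bs].
  by move: Eb; rewrite bsof_cons; case: (l.-1).
by rewrite top -Eb series_zeta.
Qed.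

Unset Implicit Arguments. Set Strict Implicit.
Local Close Scope classical_set_scope.

Theorem theorem1p1 (R : realType) (k : nat) (hk : (1 <= k)%N) (i : nat -> nat) :
  (* (i) r = 2k+1 *)
  ((1 <= i 1)%N -> (forall j, (1 <= j < 2 * k + 1)%N -> (i j < i j.+1)%N) ->
    cube_int (i (2 * k + 1)%N)
      (fun x => ((denom i (2 * k + 1) x)^-1)%:E)
    = zeta_star (R := R) (zblocks i k ++ [:: (i (2 * k + 1) - i (2 * k))%N]))
  /\
  (* (ii) r = 2k *)
  ((1 <= i 1)%N -> (forall j, (1 <= j < 2 * k)%N -> (i j < i j.+1)%N) ->
    cube_int (i (2 * k)%N)
      (fun x => ((denom i (2 * k) x)^-1)%:E)
    = zeta_star (R := R) (zblocks i k)).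
Proof.
split => i1 iinc.
  rewrite -zblocks_odd //; apply: main_r => //; lia.
rewrite -zblocks_even; apply: main_r => //; lia.
Qed.
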